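(* Let $n \ge 2$ and let $Q(x) = x_1x_2 + x_3x_4 + \cdots + x_{2n-1}x_{2n}$ be the hyperbolic quadratic form on $V(2n,2)$. Let $\Pi$ and $\Sigma$ be two totally singular $n$-dimensional subspaces with $\Pi \cap \Sigma = 0$. If $Y$ is a singular point with $Y \not\subseteq \Pi$ and $Y \not\subseteq \Sigma$, then there is a unique $2$-dimensional subspace (line) $J$ containing $Y$ such that $J \cap \Pi \neq 0$ and $J \cap \Sigma \neq 0$; moreover this line $J$ is totally singular.
   Context: Points are $1$-dimensional subspaces, lines are $2$-dimensional subspaces. A point $\langle y\rangle$ is singular if $Q(y)=0$; a subspace is totally singular if all its points are singular. *)

(* Defs.v *)
From HB Require Import structures.
From mathcomp Require Import all_boot all_order all_algebra.
Set Implicit Arguments. Unset Strict Implicit. Unset Printing Implicit Defensive.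
Import GRing.Theory.
Local Open Scope ring_scope.

(* The ambient space V(2n,2) = row vectors of length 2n over GF(2).
   Coordinates are indexed 0..2n-1, so x_{2i+1} x_{2i+2} (1-based) is
   x (2i) * x (2i+1) (0-based). *)
Notation V n := 'rV['F_2]_(n.*2).

Lemma pair_fst_proof n (i : 'I_n) : (i.*2 < n.*2)%N.
Proof. by rewrite ltn_double. Qed.

Lemma pair_snd_proof n (i : 'I_n) : (i.*2.+1 < n.*2)%N.
Proof. by rewrite -doubleS leq_double. Qed.

Definition pair_fst n (i : 'I_n) : 'I_(n.*2) := Ordinal (pair_fst_proof i).
Definition pair_snd n (i : 'I_n) : 'I_(n.*2) := Ordinal (pair_snd_proof i).

Definition hypQ n (x : V n) : 'F_2 :=
  \sum_(i < n) x 0 (pair_fst i) * x 0 (pair_snd i).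

Definition totally_singular n (U : {vspace V n}) : Prop :=
  forall y, y \in U -> hypQ y = 0.

Definition singular_point n (Y : {vspace V n}) : Prop :=
  \dim Y = 1%N /\ totally_singular Y.

(* Main.v *)
Require Import Defs.
From HB Require Import structures.
From mathcomp Require Import all_boot all_order all_algebra.
Set Implicit Arguments. Unset Strict Implicit.
Import GRing.Theory.
Local Open Scope ring_scope.

Lemma F2_cases (a : 'F_2) : a = 0 \/ a = 1.
Proof. case: a => [[|[|m]] Hm]. left. apply: val_inj. done. right; apply: val_inj; done. done. Qed.

Lemma dim_line2 (K : fieldType) (vT : vectType K) (u v : vT) :
  u != 0 -> v != 0 -> (<[u]> :&: <[v]> = 0)%VS -> \dim (<[u]> + <[v]>) = 2%N.
Proof.
move=> u0 v0 I; have := dimv_sum_cap <[u]> <[v]>.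
by rewrite I dimv0 !dim_vline u0 v0 addn0.
Qed.

Lemma cap_lines_0 (K : fieldType) (vT : vectType K) (P S : {vspace vT}) (u v : vT) :
  (P :&: S = 0)%VS -> u \in P -> v \in S -> (<[u]> :&: <[v]> = 0)%VS.
Proof.
move=> PS uP vS; apply/eqP; rewrite -subv0 -PS; apply: capvS; by rewrite -memvE.
Qed.

Theorem mainTheorem3 (n : nat) (hn : (2 <= n)%N)
    (Pi Sigma Y : {vspace 'rV['F_2]_(n.*2)}) :
  \dim Pi = n -> totally_singular Pi ->
  \dim Sigma = n -> totally_singular Sigma ->
  (Pi :&: Sigma)%VS = 0%VS ->
  singular_point Y -> ~~ (Y <= Pi)%VS -> ~~ (Y <= Sigma)%VS ->
  exists J : {vspace 'rV['F_2]_(n.*2)},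
    [/\ \dim J = 2%N, (Y <= J)%VS, (J :&: Pi)%VS != 0%VS & (J :&: Sigma)%VS != 0%VS] /\
    (forall J' : {vspace 'rV['F_2]_(n.*2)},
       \dim J' = 2%N -> (Y <= J')%VS -> (J' :&: Pi)%VS != 0%VS ->
       (J' :&: Sigma)%VS != 0%VS -> J' = J) /\
    totally_singular J.
Proof.
move=> dP tsP dS tsS PS [dY tsY] YP YS.
set y := vpick Y.
have Y0 : Y != 0%VS by apply/eqP => Y0; rewrite Y0 dimv0 in dY.
have y0 : y != 0 by rewrite vpick0.
have yY : y \in Y := memv_pick Y.
have eY : Y = <[y]>%VS.
  apply/eqP; rewrite eq_sym eqEdim -memvE yY dY dim_vline y0 //.
have yP : y \notin Pi by rewrite memvE -eY.
have yS : y \notin Sigma by rewrite memvE -eY.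
have Qy : hypQ y = 0 := tsY y yY.
have Q0 : hypQ (0 : 'rV['F_2]_(n.*2)) = 0 := tsP 0 (mem0v _).
have full : (Pi + Sigma)%VS = fullv.
  apply/eqP; rewrite eqEdim subvf /=.
  have := dimv_sum_cap Pi Sigma; rewrite PS dimv0 addn0 dP dS => ->.
  by rewrite dimvf /dim /= mul1n addnn.
have : y \in (Pi + Sigma)%VS by rewrite full memvf.
case/memv_addP => p pP [s sS ey].
have p0 : p != 0 by apply: contra yS => /eqP p0; rewrite ey p0 add0r.
have s0 : s != 0 by apply: contra yP => /eqP s0; rewrite ey s0 addr0.
have uniq_dec : forall p' s', p' \in Pi -> s' \in Sigma -> y = p' + s' -> p' = p /\ s' = s.
  move=> p' s' p'P s'S e.
  have e2 : p + s = p' + s' by rewrite -ey.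
  have d : p' - p = s - s'.
    have -> : p' = p + s - s' by rewrite e2 addrK.
    by rewrite addrC addrA addKr.
  have : p' - p \in (Pi :&: Sigma)%VS by rewrite memv_cap rpredB //= d rpredB.
  rewrite PS memv0 subr_eq0 => /eqP Hp; split=> //.
  by move: d; rewrite Hp subrr => /eqP; rewrite eq_sym subr_eq0 => /eqP.
exists (<[p]> + <[s]>)%VS; split; [|split].
- split.
  + exact: dim_line2 p0 s0 (cap_lines_0 PS pP sS).
  + by rewrite eY -memvE ey memv_add // memv_line.
  + apply/eqP => /eqP; rewrite -subv0 => /subvP /(_ p).
    by rewrite memv_cap memv0 (negPf p0) pP memvE addvSl => /(_ isT).
  + apply/eqP => /eqP; rewrite -subv0 => /subvP /(_ s).
    by rewrite memv_cap memv0 (negPf s0) sS memvE addvSr => /(_ isT).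
- move=> J' dJ' YJ' JP JS.
  set p' := vpick (J' :&: Pi)%VS; set s' := vpick (J' :&: Sigma)%VS.
  have p'0 : p' != 0 by rewrite /p' vpick0.
  have s'0 : s' != 0 by rewrite /s' vpick0.
  have /[!memv_cap] /andP[p'J p'P] := memv_pick (J' :&: Pi)%VS.
  have /[!memv_cap] /andP[s'J s'S] := memv_pick (J' :&: Sigma)%VS.
  rewrite -/p' in p'J p'P; rewrite -/s' in s'J s'S.
  have eJ : J' = (<[p']> + <[s']>)%VS.
    apply/eqP; rewrite eq_sym eqEdim subv_add -!memvE p'J s'J dJ'.
    by rewrite (dim_line2 p'0 s'0 (cap_lines_0 PS p'P s'S)).
  have : y \in J' by rewrite memvE -eY.
  rewrite eJ => /memv_addP [u /vlineP [a ->] [v /vlineP [b ->] eyab]].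
  move: eyab; case: (F2_cases a) => ->; case: (F2_cases b) => ->;
    rewrite ?scale0r ?scale1r ?addr0 ?add0r => eyab.
  + by rewrite eyab eqxx in y0.
  + by rewrite eyab s'S in yS.
  + by rewrite eyab p'P in yP.
  + by have [-> ->] := uniq_dec _ _ p'P s'S eyab.
- move=> z /memv_addP [u /vlineP [a ->] [v /vlineP [b ->] ->]].
  case: (F2_cases a) => ->; case: (F2_cases b) => ->;
    rewrite ?scale0r ?scale1r ?addr0 ?add0r //.
  + exact: tsS.
  + exact: tsP.
  + by rewrite -ey.
Qed.
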